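(* Let $N,K,d$ be positive integers, let $\bm{r}\in\mathbb{R}^d$, let $i_w\in\{1,\dots,d\}$, let $\mathcal{H}$ be a finite nonempty scenario set, and for each $k\in\{1,\dots,K\}$ and $h\in\mathcal{H}$ let $\bm{M^{k,h}}\in\mathbb{R}^{d\times d}$. Let $\mathcal{Y}=\{\bm{y}\in\{0,1\}^{K\times d}:\sum_{k=1}^K y_{k,i}=1,\ i=1,\dots,d\}$. For $\bm{y}\in\mathcal{Y}$ and $h\in\mathcal{H}$ define vectors $\bm{u^h_n}\in\mathbb{R}^d$ by $\bm{u^h_0}=\bm{r}$ and $u^h_{n,j}=\sum_{k=1}^K\sum_{i=1}^d u^h_{n-1,i}M^{k,h}_{ij}y_{k,i}$ for $n=1,\dots,N$, $j=1,\dots,d$, and set $\ell_h(\bm{y})=u^h_{N,i_w}$. Let $\alpha\in(0,1]$ and let $\mathcal{H}^1,\dots,\mathcal{H}^P$ be a partition of $\mathcal{H}$ into $P$ subsets of equal cardinality with $\alpha|\mathcal{H}^p|\in\mathbb{Z}_+$ for all $p$. Let $\hat z_{\mathcal{H}}=\max_{\bm{y}\in\mathcal{Y}}s_\alpha\big([\ell_h(\bm{y})]_{h\in\mathcal{H}}\big)$ and for each $p$ let $\bm{y^{(p)}}\in\arg\max_{\bm{y}\in\mathcal{Y}}s_\alpha\big([\ell_h(\bm{y})]_{h\in\mathcal{H}^p}\big)$. Then $$\max_{p=1,\dots,P}s_\alpha\big([\ell_h(\bm{y^{(p)}})]_{h\in\mathcal{H}}\big)\ \le\ \hat z_{\mathcal{H}}\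 \le\ \frac1P\sum_{p=1}^P s_\alpha\big([\ell_h(\bm{y^{(p)}})]_{h\in\mathcal{H}^p}\big).$$
   Context: For a finite index set $\mathcal{G}$, a vector $\bm{\upsilon}\in\mathbb{R}^{|\mathcal{G}|}$ and $\alpha\in(0,1]$ with $\alpha|\mathcal{G}|\in\mathbb{Z}_+$, $s_\alpha(\bm{\upsilon})$ denotes the average of the $\alpha|\mathcal{G}|$ smallest entries of $\bm{\upsilon}$. In the paper $\hat z_{\mathcal{H}}$ is defined as the optimal value of a mixed-integer linear program that is an exact reformulation of the maximization problem written above; $i_w$ is the index of the target (''wild type'') state and $y_{k,i}=1$ means antibiotic $k$ is applied whenever the state is $i$. *)

(* Defs.v *)
From HB Require Import structures.
From mathcomp Require Import all_boot all_order all_algebra.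
From mathcomp Require Import reals.
Set Implicit Arguments. Unset Strict Implicit. Unset Printing Implicit Defensive.
Import Order.TTheory GRing.Theory Num.Theory.
Local Open Scope ring_scope.

(* Maximum of f over the (nonempty) finite set A; 0 if A is empty (never used
   in that case). *)
Definition fmax (R : realDomainType) (T : finType) (A : pred T) (f : T -> R) : R :=
  match [pick x in A] with
  | Some x0 => \big[Num.max/f x0]_(x in A) f x
  | None => 0
  end.

(* s_alpha(v restricted to G): the average of the alpha|G| smallest entries of
   [v h]_{h in G}.  alpha|G| is assumed to be an integer, so truncn is exact. *)
Definition s_alpha (R : realType) (H : finType) (alpha : R) (G : {set H})
    (v : H -> R) : R :=
  let m := Num.truncn (alpha * #|G|%:R) in
  (\sum_(x <- take m (sort <=%R [seq v h | h <- enum G])) x) / m%:R.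

Definition inY (K d : nat) (y : 'M[bool]_(K, d)) : bool :=
  [forall i : 'I_d, (\sum_(k < K) nat_of_bool (y k i)) == 1%N].

Fixpoint u (R : realType) (H : finType) (K d : nat) (r : 'rV[R]_d)
    (M : 'I_K -> H -> 'M[R]_d) (y : 'M[bool]_(K, d)) (h : H) (n : nat) : 'rV[R]_d :=
  match n with
  | 0 => r
  | n'.+1 =>
      let v := u r M y h n' in
      \row_j \sum_(k < K) \sum_(i < d) v 0 i * M k h i j * (y k i)%:R
  end.

Definition ell (R : realType) (H : finType) (N K d : nat) (r : 'rV[R]_d)
    (iw : 'I_d) (M : 'I_K -> H -> 'M[R]_d) (y : 'M[bool]_(K, d)) (h : H) : R :=
  u r M y h N 0 iw.

(* Main.v *)
Require Import Defs.
From HB Require Import structures.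
From mathcomp Require Import all_boot all_order all_algebra.
From mathcomp Require Import reals.
Import Order.TTheory GRing.Theory Num.Theory.
Local Open Scope ring_scope.

Section S.
Variable R : realType.
Implicit Types (s u w : seq R).

Definition gsum (u : seq R) m := \sum_(x <- take m (sort <=%R u)) x.

Fixpoint ins (x : R) s := if s is y :: s' then
  (if x <= y then x :: y :: s' else y :: ins x s') else [:: x].

Lemma insE x s : ins x s = merge <=%R [:: x] s.
Proof. by elim: s => //= y s ->; case: ifP. Qed.

Lemma sort_cons x u : sort <=%R (x :: u) = ins x (sort <=%R u).
Proof.
apply: (sorted_eq le_trans le_anti); first by apply: sort_sorted => a b; exact: le_total.
  rewrite insE; apply: merge_sorted => //; first exact: le_total.
  by apply: sort_sorted => a b; exact: le_total.
by rewrite perm_sort perm_sym insE perm_merge /= perm_cons perm_sort.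
Qed.

Lemma take_ins_le x s m : sorted <=%R s -> (m <= size s)%N ->
  \sum_(z <- take m (ins x s)) z <= \sum_(z <- take m s) z.
Proof.
elim: s m => [|y s IH] [|m] Hs Hm; rewrite ?take0 ?big_nil //=.
case: ifP => xy.
  have Hall : all (fun z => x <= z) (y :: s).
    apply/allP => z zin; apply: le_trans xy _.
    move: zin; rewrite inE => /orP[/eqP->//|zin].
    by have := order_path_min le_trans Hs; move/allP => /(_ z zin).
  rewrite -[y :: take m s]/(take m.+1 (y :: s)) -[take m.+1 [:: x, y & s]]/(x :: take m (y :: s)).
  rewrite big_cons (take_nth 0 Hm) -cats1 big_cat big_seq1 /= addrC lerD2r.
  by move/allP: Hall; apply; apply: mem_nth.
rewrite /= !big_cons lerD2l; apply: IH => //.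
exact: path_sorted Hs.
Qed.

Lemma gsum_cons x u m : (m <= size u)%N -> gsum (x :: u) m <= gsum u m.
Proof.
move=> Hm; rewrite /gsum sort_cons; apply: take_ins_le.
  by apply: sort_sorted => a b; exact: le_total.
by rewrite size_sort.
Qed.

Lemma gsum_perm u u' m : perm_eq u u' -> gsum u m = gsum u' m.
Proof. by rewrite /gsum => /(perm_sortP le_total le_trans le_anti) ->. Qed.

Lemma gsum_lb w w' u : perm_eq (w ++ w') u -> gsum u (size w) <= \sum_(x <- w) x.
Proof.
move=> Hp; rewrite -(gsum_perm _ _ _ Hp).
elim: w' {u Hp} => [|y w' IH].
  rewrite cats0 /gsum take_oversize ?size_sort //.
  by rewrite (perm_big w) // perm_sort.
rewrite (gsum_perm _ ([:: y] ++ w ++ w') _); last by rewrite -cat1s perm_catCA.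
apply: le_trans IH; apply: gsum_cons.
by rewrite size_cat leq_addr.
Qed.
End S.
Arguments gsum {R}.
Arguments gsum_lb {R}.

Section F.
Variables (R : realDomainType) (T : finType).
Lemma fmax_ub (A : pred T) (f : T -> R) x : x \in A -> f x <= fmax A f.
Proof.
move=> Hx; rewrite /fmax; case: pickP => [x0 Hx0|H0]; last by rewrite H0 in Hx.
rewrite -big_enum; have : x \in enum A by rewrite mem_enum.
elim: (enum A) => //= y s IH; rewrite big_cons inE => /orP[/eqP->|/IH Hs].
  by rewrite le_max lexx.
by rewrite le_max Hs orbT.
Qed.

Lemma fmax_att (A : pred T) (f : T -> R) x : x \in A -> exists2 y, y \in A & fmax A f = f y.
Proof.
move=> Hx; rewrite /fmax; case: pickP => [x0 Hx0|H0]; last by rewrite H0 in Hx.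
apply: (big_ind (fun z => exists2 y, y \in A & z = f y)).
- by exists x0.
- move=> a b [ya Ha ->] [yb Hb ->]; case: (leP (f ya) (f yb)) => _.
  + by exists yb.
  + by exists ya.
- by move=> i Hi; exists i.
Qed.
End F.
Arguments fmax_att {R T}.
Arguments fmax_ub {R T}.

Lemma count_map_enum (R : realType) (H : finType) (G : {set H}) (v : H -> R) a :
  count a [seq v h | h <- enum G] = (\sum_(h in G) (if a (v h) then 1 else 0))%N.
Proof. by rewrite count_map -sum1_count big_enum_cond big_mkcondr. Qed.

Theorem proposition4 (R : realType) (N K d : nat) (r : 'rV[R]_d) (iw : 'I_d)
    (H : finType) (M : 'I_K -> H -> 'M[R]_d) (alpha : R)
    (P : nat) (Hp : 'I_P -> {set H}) (yp : 'I_P -> 'M[bool]_(K, d)) :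
  (0 < N)%N -> (0 < K)%N -> (0 < d)%N -> (0 < #|H|)%N ->
  0 < alpha -> alpha <= 1 ->
  (* H^1..H^P partition H into subsets of equal cardinality *)
  (forall p q : 'I_P, p != q -> [disjoint Hp p & Hp q]) ->
  \bigcup_(p < P) Hp p = [set: H] ->
  (forall p q : 'I_P, #|Hp p| = #|Hp q|) ->
  (forall p : 'I_P, exists m : nat, (0 < m)%N /\ alpha * #|Hp p|%:R = m%:R) ->
  (* y^(p) in argmax_{y in Y} s_alpha([ell_h(y)]_{h in H^p}) *)
  (forall p : 'I_P, inY (yp p) /\
     forall y, inY y ->
       s_alpha alpha (Hp p) (ell N r iw M y) <=
       s_alpha alpha (Hp p) (ell N r iw M (yp p))) ->
  let zhat := fmax (fun y : 'M[bool]_(K, d) => inY y)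
                   (fun y => s_alpha alpha [set: H] (ell N r iw M y)) in
  fmax (fun _ : 'I_P => true)
       (fun p => s_alpha alpha [set: H] (ell N r iw M (yp p))) <= zhat /\
  zhat <= P%:R^-1 * \sum_(p < P) s_alpha alpha (Hp p) (ell N r iw M (yp p)).

Proof.
move=> HN HK Hd HH Ha0 Ha1 Hdis Hcov Hcard Hm Hopt zhat.
have [h0 _] := card_gt0P HH.
have /bigcupP[p0 _ _] : h0 \in \bigcup_(p < P) Hp p by rewrite Hcov inE.
have HP : (0 < P)%N by apply: leq_ltn_trans (ltn_ord p0).
have [m [m0 Hm0]] := Hm p0.
have Hmp p : alpha * #|Hp p|%:R = m%:R by rewrite (Hcard p p0).
have Hpart (F : H -> nat) : (\sum_(h : H) F h = \sum_(p < P) \sum_(h in Hp p) F h)%N.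
  under [RHS]eq_bigr do rewrite big_mkcond /=.
  rewrite exchange_big /=; apply: eq_bigr => h _.
  have /bigcupP[q _ hq] : h \in \bigcup_(p < P) Hp p by rewrite Hcov inE.
  rewrite (bigD1 q) //= hq big1 ?addn0 // => p pq.
  by case: ifP => // hp; rewrite (disjointFr (Hdis p q pq) hp) in hq.
have HcardH : #|H| = (P * #|Hp p0|)%N.
  have := Hpart (fun _ => 1%N).
  rewrite sum1_card => ->.
  under eq_bigr do rewrite sum1_card (Hcard _ p0).
  by rewrite sum_nat_const card_ord.
have Hs p (v : H -> R) :
    s_alpha alpha (Hp p) v = gsum [seq v h | h <- enum (Hp p)] m / m%:R.
  by rewrite /s_alpha Hmp natrK.
have HsH (v : H -> R) : s_alpha alpha [set: H] v =
    gsum [seq v h | h <- enum [set: H]] (P * m) / (P * m)%:R.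
  have E : alpha * #|[set: H]|%:R = (P * m)%:R.
    by rewrite cardsT HcardH natrM mulrCA Hm0 natrM.
  by rewrite /s_alpha E natrK.
have HC (v : H -> R) : gsum [seq v h | h <- enum [set: H]] (P * m) <=
    \sum_(p < P) gsum [seq v h | h <- enum (Hp p)] m.
  pose L p := sort <=%R [seq v h | h <- enum (Hp p)].
  have HmL p : (m <= size (L p))%N.
    rewrite size_sort size_map -cardE -(ler_nat R) -(Hmp p) ler_piMl //.
  pose w := flatten [seq take m (L p) | p <- index_enum 'I_P].
  pose w' := flatten [seq drop m (L p) | p <- index_enum 'I_P].
  have Hsw : size w = (P * m)%N.
    rewrite size_flatten /shape -map_comp sumnE big_map.
    rewrite (eq_bigr (fun _ => m)); last by move=> p _; rewrite /= size_takel.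
    by rewrite big_const_ord iter_addn_0 mulnC.
  rewrite -Hsw; apply: le_trans (gsum_lb w w' _ _) _.
    apply/permP => a; rewrite count_cat !count_flatten !sumnE !big_map -big_split /=.
    under eq_bigr do rewrite -count_cat cat_take_drop count_sort count_map_enum.
    rewrite count_map_enum -Hpart.
    by apply: eq_bigl => h; rewrite inE.
  by rewrite big_flatten /= big_map.
pose k0 : 'I_K := Ordinal HK.
pose y0 : 'M[bool]_(K, d) := \matrix_(k, i) (k == k0).
have Hy0 : inY y0.
  apply/forallP => i; rewrite (bigD1 k0) //= mxE eqxx big1 // => k kk0.
  by rewrite mxE (negbTE kk0).
split.
  have [p _ ->] := fmax_att (fun _ : 'I_P => true)
    (fun p => s_alpha alpha [set: H] (ell N r iw M (yp p))) p0 isT.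
  rewrite /zhat; apply: fmax_ub; exact: (Hopt p).1.
rewrite /zhat; have [ys Hys ->] := fmax_att (fun y : 'M[bool]_(K, d) => inY y)
    (fun y => s_alpha alpha [set: H] (ell N r iw M y)) y0 Hy0.
apply: (le_trans (y := P%:R^-1 * \sum_(p < P) s_alpha alpha (Hp p) (ell N r iw M ys))); last first.
  rewrite ler_wpM2l ?invr_ge0 ?ler0n //; apply: ler_sum => p _; exact: (Hopt p).2.
rewrite HsH; under eq_bigr do rewrite Hs.
rewrite -mulr_suml natrM invfM [X in _ <= X]mulrCA.
apply: ler_wpM2r; first by rewrite mulr_ge0 ?invr_ge0 ?ler0n.
exact: HC.
Qed.
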